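(* Let $f(\mathbf{x})=\mathbf{x}^{T}A\mathbf{x}+b^{T}\mathbf{x}+1$ with $A\in\mathbb{R}^{n\times n}$ symmetric, $b\in\mathbb{R}^n$, $A\neq 0$, and suppose $f(\mathbf{x})=\det(I_k+x_1A_1+\dots+x_nA_n)$ for some $k\ge 2$ and Hermitian (or real symmetric) $k\times k$ matrices $A_1,\dots,A_n$. If $A$ is not negative semidefinite, then the spectrahedron $S=\{\mathbf{x}\in\mathbb{R}^n: I_k+\sum_j x_jA_j\succeq 0\}$ contains a full dimensional cone; more precisely, there exists $v\in\mathbb{R}^n$ with $\sum_j v_jA_j\succeq 0$ and $\operatorname{rank}(\sum_j v_jA_j)=2=\deg f$.
   Context: For $f(\mathbf{x})=\det(I+x_1A_1+\dots+x_nA_n)$ of degree $d$ and $S=\{\mathbf{x}: I+\sum_j x_jA_j\succeq 0\}$, the spectrahedron $S$ is said to contain a full dimensional cone if there exists $\mathbf{x}\in\mathbb{R}^n$ such that $L(\mathbf{x}):=x_1A_1+\dots+x_nA_n\succeq 0$ and $\operatorname{rank}L(\mathbf{x})=d$ (equivalently, the half ray $\{\lambda\mathbf{x}:\lambda\ge0\}$ lies in $S$ and $\operatorname{rank}L(\mathbf{x})=d$). *)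

(* Defs.v *)
(* Scalars live in a numeric closed field C (e.g. algC);
   "real" scalars are those with x \is Num.real.  Real symmetric matrices are
   the special case of Hermitian matrices with real entries. *)
From HB Require Import structures.
From mathcomp Require Import all_boot all_order all_algebra.
Set Implicit Arguments. Unset Strict Implicit. Unset Printing Implicit Defensive.
Import Order.TTheory GRing.Theory Num.Theory.
Local Open Scope ring_scope.

Definition ctrmx (C : numClosedFieldType) m n (M : 'M[C]_(m, n)) : 'M[C]_(n, m) :=
  \matrix_(i < n, j < m) (M j i)^*.

Definition hermitian_mx (C : numClosedFieldType) k (M : 'M[C]_k) : Prop :=
  ctrmx M = M.

Definition psd (C : numClosedFieldType) k (M : 'M[C]_k) : Prop :=
  hermitian_mx M /\ forall v : 'cV[C]_k, 0 <= (ctrmx v *m M *m v) 0 0.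

Definition real_mx (C : numClosedFieldType) m n (M : 'M[C]_(m, n)) : Prop :=
  forall i j, M i j \is Num.real.

Definition pencil (C : numClosedFieldType) n k (As : 'I_n -> 'M[C]_k)
  (x : 'cV[C]_n) : 'M[C]_k := \sum_(j < n) x j 0 *: As j.

Definition quadf (C : numClosedFieldType) n (A : 'M[C]_n) (b x : 'cV[C]_n) : C :=
  (x^T *m A *m x) 0 0 + (b^T *m x) 0 0 + 1.

Definition nsd_real (C : numClosedFieldType) n (A : 'M[C]_n) : Prop :=
  forall x : 'cV[C]_n, real_mx x -> (x^T *m A *m x) 0 0 <= 0.

(* Main.v *)
Require Import Defs.
From HB Require Import structures.
From mathcomp Require Import all_boot all_order all_algebra ring.
From mathcomp Require Import sesquilinear spectral.
Import Order.TTheory GRing.Theory Num.Theory Num.Def.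
Set Implicit Arguments. Unset Strict Implicit.
Local Open Scope ring_scope.
From Stdlib Require Import Classical.
Lemma rank_diag (F : fieldType) n (e : 'rV[F]_n) :
  \rank (diag_mx e) = (\sum_(i < n) (e ord0 i != 0%R))%N.
Proof.
elim: n e => [|n IH] e; first by rewrite big_ord0 thinmx0 ?mxrank0 // flatmx0 mxrank0.
have := hsubmxK (e : 'rV_(1 + n)) => He.
rewrite big_ord_recl.
rewrite -[diag_mx e]/(diag_mx (e : 'rV_(1+n))) -He.
move: (lsubmx _) (rsubmx _) => l r {He e}.
rewrite diag_mx_row.
have -> := rank_diag_block_mx (diag_mx l) (diag_mx r).
rewrite IH.
congr (_ + _)%N.
  rewrite rank_rV mxE; case: splitP => [j _|//].
  rewrite (ord1 j); congr (nat_of_bool _).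
  apply/idP/idP.
    apply: contra => /eqP Hl. apply/eqP/matrixP => i k; rewrite !mxE !ord1 /= Hl.
    by rewrite mul0rn.
  apply: contra => /eqP /matrixP /(_ 0 0); rewrite !mxE eqxx mulr1n => Hl.
  by rewrite Hl.
apply: eq_bigr => i _.
rewrite mxE; case: splitP => [j Hv|j /= [] /val_inj -> //].
by have := ltn_ord j; rewrite -Hv /= /bump.
Qed.
Lemma ctrmxE (C : numClosedFieldType) m n (M : 'M[C]_(m, n)) :
  ctrmx M = map_mx conjC (M^T).
Proof. by apply/matrixP => i j; rewrite !mxE. Qed.

Lemma psd_diag (C : numClosedFieldType) k (P : 'M[C]_k) (e : 'rV[C]_k) :
  (forall i, 0 <= e ord0 i) ->
  psd (map_mx conjC (P^T) *m diag_mx e *m P).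
Proof.
move=> e0; split.
  rewrite /hermitian_mx ctrmxE !trmx_mul !map_mxM trmxCK tr_diag_mx map_diag_mx mulmxA.
  congr (_ *m _ *m _); congr diag_mx; apply/matrixP => i j.
  by rewrite !mxE ord1; apply: conj_Creal; apply: ger0_real.
move=> v.
have -> : ctrmx v *m (map_mx conjC P^T *m diag_mx e *m P) *m v =
          map_mx conjC (P *m v)^T *m diag_mx e *m (P *m v).
  by rewrite ctrmxE trmx_mul map_mxM !mulmxA.
rewrite mul_mx_diag mxE; apply: sumr_ge0 => i _.
rewrite !mxE -mulrA [e _ _ * _]mulrC mulrA -normCKC.
by apply: mulr_ge0 => //; apply: exprn_ge0.
Qed.
Lemma size_lin (R : idomainType) (c : R) : c != 0 ->
  size (c%:P * 'X + 1%:P) = 2%N /\ lead_coef (c%:P * 'X + 1%:P) = c.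
Proof.
move=> c0.
have s1 : size (c%:P * 'X) = 2%N by rewrite size_mulX ?polyC_eq0 // size_polyC c0.
split; first by rewrite size_MXaddC polyC_eq0 (negbTE c0) /= size_polyC c0.
by rewrite lead_coefDl ?s1 ?size_polyC ?oner_eq0 // lead_coefMX lead_coefC.
Qed.

Lemma poly_count (C : numFieldType) k (d : 'rV[C]_k) (a b : C) : a != 0 ->
  (forall m : nat, \prod_i (1 + m%:R * d ord0 i) = m%:R ^+ 2 * a + m%:R * b + 1) ->
  (\sum_(i | d ord0 i != 0%R) 1 = 2)%N /\ \prod_(i | d ord0 i != 0) d ord0 i = a.
Proof.
move=> a0 H.
pose F i := (d ord0 i)%:P * 'X + 1%:P.
pose p := \prod_i F i.
pose q := (a%:P * 'X + b%:P) * 'X + 1%:P.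
have pq : p = q.
  apply/eqP; rewrite -subr_eq0; apply/eqP.
  apply: (@roots_geq_poly_eq0 _ _ [seq m%:R | m <- iota 0 (size (p - q))]).
  - apply/allP => _ /mapP [m _ ->]; rewrite /root hornerD hornerN horner_prod.
    rewrite subr_eq0; apply/eqP.
    have -> : \prod_i (F i).[m%:R] = \prod_i (1 + m%:R * d ord0 i).
      by apply: eq_bigr => i _; rewrite /F !hornerE addrC mulrC.
    by rewrite H /q !hornerE; ring.
  - rewrite map_inj_uniq ?iota_uniq // => x y /eqP; rewrite eqr_nat => /eqP //.
  - by rewrite size_map size_iota.
have split_p : p = \prod_(i | d ord0 i != 0) F i.
  rewrite /p (bigID (fun i => d ord0 i != 0)) /= [X in _ * X]big1 ?mulr1 //.
  by move=> i /negPn /eqP Hi; rewrite /F Hi polyC0 mul0r add0r.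
have sq : size q = 3%N.
  rewrite /q size_MXaddC.
  have -> : size (a%:P * 'X + b%:P) = 2%N.
    by rewrite size_MXaddC polyC_eq0 (negbTE a0) /= size_polyC a0.
  by rewrite oner_eq0 andbF.
have lq : lead_coef q = a.
  rewrite /q lead_coefDl; last first.
    rewrite size_polyC oner_eq0 size_mulX ?ltnS ?size_poly_gt0.
      rewrite -size_poly_gt0 size_MXaddC polyC_eq0 (negbTE a0) //.
    rewrite -size_poly_gt0 size_MXaddC polyC_eq0 (negbTE a0) //.
  rewrite lead_coefMX lead_coefDl; last first.
    rewrite size_polyC size_mulX ?polyC_eq0 // size_polyC a0.
    by case: (b != 0).
  by rewrite lead_coefMX lead_coefC.
split.
  have : size p = 3%N by rewrite pq.
  rewrite split_p size_prod; last first.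
    move=> i Hi; rewrite -size_poly_eq0 (size_lin Hi).1 //.
  rewrite (eq_bigr (fun _ => 1 + 1)%N); last by move=> i Hi; rewrite (size_lin Hi).1.
  rewrite big_split /=.
  have -> : #|(fun i : 'I_k => d ord0 i != 0)| = (\sum_(i | d ord0 i != 0%R) 1)%N.
    by rewrite -sum1_card; apply: eq_bigl.
  set s := (\sum_(i | _) 1)%N. rewrite -addSn addnK. by case.

rewrite -lq -pq split_p lead_coef_prod; apply: eq_bigr => i Hi.
by rewrite (size_lin Hi).2.
Qed.
Lemma sign_split (C : numFieldType) k (d : 'rV[C]_k) (a : C) :
  (forall i, d ord0 i \is Num.real) -> 0 < a ->
  (\sum_(i | d ord0 i != 0%R) 1 = 2)%N ->
  \prod_(i | d ord0 i != 0) d ord0 i = a ->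
  (forall i, 0 <= d ord0 i) \/ (forall i, d ord0 i <= 0).
Proof.
move=> dr a0 hs hp.
have nomix : forall i j, 0 < d ord0 i -> d ord0 j < 0 -> False.
  move=> i j hi hj.
  have ij : j != i by apply/eqP => E; move: hj; rewrite E => hj; move: (lt_trans hi hj); rewrite ltxx.
  have Si : d ord0 i != 0 by rewrite gt_eqF.
  have Sj : (d ord0 j != 0) && (j != i) by rewrite lt_eqF.
  rewrite (bigD1 i) // (bigD1 j) //= in hs.
  rewrite (bigD1 i) // (bigD1 j) //= in hp.
  rewrite !add1n in hs; case: hs => hrest.
  rewrite big1 in hp; last first.
    move=> l hl; exfalso; move: hrest; rewrite (bigD1 l) //.
  rewrite mulr1 in hp.
  have : d ord0 i * d ord0 j < 0 by rewrite pmulr_rlt0.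
  by rewrite hp; move/(lt_trans a0); rewrite ltxx.
have [/existsP [i hi]|hn] := boolP [exists i, d ord0 i < 0].
  right => j; rewrite real_leNgt ?real0 //; apply/negP => hj.
  exact: nomix hj hi.
left => j; rewrite real_leNgt ?real0 //; apply/negP => hj.
by move/negP: hn; apply; apply/existsP; exists j.
Qed.
Lemma real_quad (C : numClosedFieldType) n (A : 'M[C]_n) (x : 'cV[C]_n) :
  real_mx A -> real_mx x -> (x^T *m A *m x) 0 0 \is Num.real.
Proof.
move=> rA rx; rewrite !mxE; apply: rpred_sum => j _; rewrite !mxE.
apply: rpredM => //; apply: rpred_sum => i _; rewrite !mxE; exact: rpredM.
Qed.

Lemma pencil_entry (C : numClosedFieldType) n k (As : 'I_n -> 'M[C]_k) x i j :
  pencil As x i j = \sum_l x l 0 * As l i j.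
Proof. by rewrite /pencil summxE; apply: eq_bigr => l _; rewrite mxE. Qed.

Lemma herm_pencil (C : numClosedFieldType) n k (As : 'I_n -> 'M[C]_k) x :
  real_mx x -> (forall j, hermitian_mx (As j)) -> hermitian_mx (pencil As x).
Proof.
move=> rx hA; apply/matrixP => i j; rewrite mxE !pencil_entry rmorph_sum.
apply: eq_bigr => l _; rewrite rmorphM; congr (_ * _); first exact: conj_Creal.
by have /matrixP /(_ i j) := hA l; rewrite mxE.
Qed.

Lemma pencilZ (C : numClosedFieldType) n k (As : 'I_n -> 'M[C]_k) x t :
  pencil As (t *: x) = t *: pencil As x.
Proof.
rewrite /pencil scaler_sumr; apply: eq_bigr => l _; by rewrite mxE scalerA.
Qed.

Lemma quadfZ (C : numClosedFieldType) n (A : 'M[C]_n) (b x : 'cV[C]_n) t :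
  quadf A b (t *: x) = t ^+ 2 * (x^T *m A *m x) 0 0 + t * (b^T *m x) 0 0 + 1.
Proof.
rewrite /quadf linearZ /= [(t *: x)^T]linearZ /= -!scalemxAl linearZ /=.
by rewrite -scalemxAr !mxE mulrA expr2.
Qed.

Lemma det_spec (C : numClosedFieldType) k (P : 'M[C]_k) (d : 'rV[C]_k) t :
  P \in unitmx ->
  \det (1%:M + t *: (invmx P *m diag_mx d *m P)) = \prod_i (1 + t * d ord0 i).
Proof.
move=> PU.
have -> : 1%:M + t *: (invmx P *m diag_mx d *m P) =
          invmx P *m diag_mx (\row_i (1 + t * d ord0 i)) *m P.
  have -> : diag_mx (\row_i (1 + t * d ord0 i)) = 1%:M + t *: diag_mx d.
    apply/matrixP => i j; rewrite !mxE; case: eqVneq => _ /=.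
      by rewrite !mulr1n.
    by rewrite !mulr0n mulr0 addr0.
  by rewrite mulmxDr mulmxDl mulmx1 mulVmx // -scalemxAr -scalemxAl.
rewrite !det_mulmx det_inv det_diag mulrC mulrA mulfV ?mul1r.
  by apply: eq_bigr => i _; rewrite mxE.
by rewrite -unitfE -unitmxE.
Qed.

Lemma fin_lemma (C : numClosedFieldType) k (P : 'M[C]_k) (e : 'rV[C]_k) :
  P \is unitarymx -> (forall i, 0 <= e ord0 i) ->
  (\sum_(i | e ord0 i != 0%R) 1 = 2)%N ->
  psd (invmx P *m diag_mx e *m P) /\ \rank (invmx P *m diag_mx e *m P) = 2%N.
Proof.
move=> Pu e0 hs; have PU := unitarymx_unit Pu.
rewrite invmx_unitary //; split; first exact: psd_diag.
rewrite mxrankMfree ?row_free_unit //.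
rewrite -mxrank_tr trmx_mul mxrankMfree ?row_free_unit ?unitmx_tr; last first.
  by apply: unitarymx_unit; rewrite trmxC_unitary.
rewrite mxrank_tr rank_diag -hs big_mkcond /=.
rewrite [RHS]big_mkcond; apply: eq_bigr => i _; by case: (e ord0 i != 0).
Qed.

Theorem mainTheorem6 (C : numClosedFieldType) (n k : nat)
  (A : 'M[C]_n) (b : 'cV[C]_n) (As : 'I_n -> 'M[C]_k) :
  real_mx A -> A^T = A -> real_mx b -> A != 0 ->
  (2 <= k)%N ->
  (forall j, hermitian_mx (As j)) ->
  (forall x : 'cV[C]_n, real_mx x ->
     quadf A b x = \det (1%:M + pencil As x)) ->
  ~ nsd_real A ->
  exists v : 'cV[C]_n, real_mx v /\ psd (pencil As v) /\ \rank (pencil As v) = 2%N.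
Proof.
move=> rA sA rb A0 k2 hAs Hf nnsd.
have [x [rx ax]] : exists x : 'cV[C]_n, real_mx x /\ 0 < (x^T *m A *m x) 0 0.
  apply: NNPP => H; apply: nnsd => x rx.
  rewrite real_leNgt ?real0 ?(real_quad rA rx) //; apply/negP => hlt.
  by apply: H; exists x.
set a := (x^T *m A *m x) 0 0 in ax.
set b' := (b^T *m x) 0 0.
set M := pencil As x.
have hM : M \is hermsymmx.
  apply/is_hermitianmxP; rewrite expr0 scale1r -ctrmxE; symmetry.
  exact: herm_pencil.
pose P := spectralmx M; pose d := spectral_diag M.
have Pu : P \is unitarymx := spectral_unitarymx M.
have PU : P \in unitmx := unitarymx_unit Pu.
have Meq : M = invmx P *m diag_mx d *m P.
  exact/orthomx_spectralP/hermitian_normalmx.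
have dr : forall i, d ord0 i \is Num.real.
  by move=> i; have /mxOverP := hermitian_spectral_diag_real hM; apply.
have hdet : forall m : nat,
    \prod_i (1 + m%:R * d ord0 i) = m%:R ^+ 2 * a + m%:R * b' + 1.
  move=> m; rewrite -quadfZ Hf; last by move=> i j; rewrite mxE rpredM ?realn.
  by rewrite pencilZ -/M Meq det_spec.
have [hs hp] := poly_count (lt0r_neq0 ax) hdet.
have [dpos|dneg] := sign_split dr ax hs hp.
  exists x; split => //; rewrite -/M Meq; exact: fin_lemma.
exists ((-1) *: x); split.
  by move=> i j; rewrite mxE rpredM ?rpredN ?real1.
rewrite pencilZ -/M Meq scaleN1r.
have -> : - (invmx P *m diag_mx d *m P) = invmx P *m diag_mx (- d) *m P.
  rewrite -mulNmx -mulmxN; congr (_ *m _ *m _).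
  by apply/matrixP => i j; rewrite !mxE mulNrn.
apply: fin_lemma => //.
  by move=> i; rewrite mxE oppr_ge0.
by rewrite -hs; apply: eq_bigl => i; rewrite mxE oppr_eq0.
Qed.
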